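(* Let $X$ be a real Banach space with the almost Daugavet property. Then every convex combination of $w^*$-slices in $B_{X^*}$ has diameter $2$.
   Context: For a subspace $Y\subseteq X^*$, $X$ has the Daugavet property with respect to $Y$ if $\|I+T\|=1+\|T\|$ for every rank-one operator $T=x\otimes y^*:X\to X$ (i.e. $T(z)=y^*(z)x$) with $x\in X$ and $y^*\in Y$. A subspace $Y\subseteq X^*$ is norming if $\|x\|=\sup\{|y^*(x)|: y^*\in Y,\|y^*\|\le1\}$ for all $x\in X$. $X$ has the almost Daugavet property if it has the Daugavet property with respect to some norming subspace of $X^*$. A $w^*$-slice of $B_{X^*}$ is $S(B_{X^*},x,\alpha)=\{f\in B_{X^*}:f(x)>1-\alpha\}$ with $x\in S_X$, $0<\alpha<1$; a convex combination of $w^*$-slices is a Minkowski sum $\sum_{i=1}^n\lambda_iS_i$ of $w^*$-slices $S_i$ with $\lambda_i>0$, $\sum_i\lambda_i=1$. *)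

(* Defs.v *)
From HB Require Import structures.
From mathcomp Require Import all_boot all_order all_algebra.
From mathcomp Require Import all_classical all_reals all_analysis.
Set Implicit Arguments. Unset Strict Implicit. Unset Printing Implicit Defensive.
Import Order.TTheory GRing.Theory Num.Theory.
Import numFieldNormedType.Exports.
Local Open Scope classical_set_scope.
Local Open Scope ring_scope.

Section Dual.
Variables (R : realType) (X : normedModType R).

Definition unit_ballX : set X := [set x | `|x| <= 1].

(* X^* : bounded (= continuous) linear functionals, as functions X -> R *)
Definition is_linear_functional (f : X -> R) : Prop :=
  forall (a : R) (x y : X), f (a *: x + y) = a * f x + f y.
Definition is_bounded_functional (f : X -> R) : Prop :=
  exists C : R, forall x : X, `|f x| <= C * `|x|.
Definition dual_space : set (X -> R) :=
  [set f | is_linear_functional f /\ is_bounded_functional f].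

Definition dnorm (f : X -> R) : R := sup [set `|f x| | x in unit_ballX].

Definition opnorm (g : X -> X) : R := sup [set `|g x| | x in unit_ballX].

Definition dual_ball : set (X -> R) := [set f | dual_space f /\ dnorm f <= 1].

Definition dual_subspace (Y : set (X -> R)) : Prop :=
  Y `<=` dual_space /\ Y (fun _ => 0) /\
  forall (a : R) (f g : X -> R), Y f -> Y g -> Y (fun z => a * f z + g z).

Definition norming (Y : set (X -> R)) : Prop :=
  forall x : X, `|x| = sup [set `|y x| | y in [set y | Y y /\ dnorm y <= 1]].

(* Daugavet property w.r.t. Y : ||I + x (x) y*|| = 1 + ||x (x) y*|| *)
Definition daugavet_wrt (Y : set (X -> R)) : Prop :=
  forall (x : X) (y : X -> R), Y y ->
    opnorm (fun z => z + y z *: x) = 1 + opnorm (fun z => y z *: x).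

Definition almost_daugavet : Prop :=
  exists Y : set (X -> R), dual_subspace Y /\ norming Y /\ daugavet_wrt Y.

Definition wslice (x : X) (alpha : R) : set (X -> R) :=
  [set f | dual_ball f /\ f x > 1 - alpha].

Definition conv_slices (n : nat) (lam : 'I_n -> R) (x : 'I_n -> X)
    (alpha : 'I_n -> R) : set (X -> R) :=
  [set f | exists fs : 'I_n -> X -> R,
      (forall i, wslice (x i) (alpha i) (fs i)) /\
      f = (fun z => \sum_(i < n) lam i * fs i z)].

Definition dual_diam (C : set (X -> R)) : R :=
  sup [set dnorm (fun z => f z - g z) | f in C & g in C].

End Dual.

(* Main.v *)
Require Import Defs.
From HB Require Import structures.
From mathcomp Require Import all_boot all_order all_algebra.
From mathcomp Require Import all_classical all_reals all_analysis.
From mathcomp Require Import lra.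
Import Order.TTheory GRing.Theory Num.Theory.
Import numFieldNormedType.Exports.
Local Open Scope classical_set_scope.
Local Open Scope ring_scope.
Set Implicit Arguments. Unset Strict Implicit.

Section S.
Variables (R : realType) (X : normedModType R).

Lemma lin0 (f : X -> R) : is_linear_functional f -> f 0 = 0.
Proof.
move=> L; have := L 1 0 0; rewrite scale1r addr0 mul1r; lra.
Qed.

Lemma linD (f : X -> R) x y : is_linear_functional f -> f (x + y) = f x + f y.
Proof. by move=> L; rewrite -[x in LHS]scale1r L mul1r. Qed.

Lemma linZ (f : X -> R) a x : is_linear_functional f -> f (a *: x) = a * f x.
Proof. by move=> L; have := L a x 0; rewrite lin0 // !addr0. Qed.

Lemma linN (f : X -> R) x : is_linear_functional f -> f (- x) = - f x.
Proof. by move=> L; rewrite -scaleN1r linZ // mulN1r. Qed.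

Lemma bnd_has_sup (f : X -> R) : is_bounded_functional f ->
  has_sup [set `|f x| | x in @unit_ballX _ X].
Proof.
case=> C HC; split; first by exists `|f 0|, 0 => //; rewrite /unit_ballX /= normr0.
exists `|C| => _ [x Hx <-]; rewrite /unit_ballX /= in Hx.
apply: (le_trans (HC x)); apply: (le_trans (ler_norm _)).
rewrite normrM (normr_id x); rewrite -[leRHS]mulr1; apply: ler_wpM2l => //.
Qed.

Lemma le_dnorm (f : X -> R) x : is_bounded_functional f -> `|x| <= 1 ->
  `|f x| <= dnorm f.
Proof. move=> B Hx; rewrite /dnorm; have := sup_upper_bound (bnd_has_sup B); apply; by exists x. Qed.

Lemma dnorm_ge0 (f : X -> R) : is_bounded_functional f -> 0 <= dnorm f.
Proof. move=> B; apply: le_trans (le_dnorm (x:=0) B _) => //; by rewrite normr0. Qed.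

Lemma le_dnormM (f : X -> R) x : dual_space f -> `|f x| <= dnorm f * `|x|.
Proof.
case=> L B; have [->|x0] := eqVneq x 0; first by rewrite lin0 // normr0 normr0 mulr0.
have nx : 0 < `|x| by rewrite normr_gt0.
have := le_dnorm B (x := `|x|^-1 *: x) _.
rewrite normrZ normfV normr_id mulVf ?gt_eqF // => /(_ (lexx _)).
rewrite linZ // normrM normfV normr_id => H.
by rewrite -ler_pdivrMr // mulrC.
Qed.


Variable Y : set (X -> R).
Hypothesis HY : dual_subspace Y.
Hypothesis HN : norming Y.

Lemma Ydual f : Y f -> dual_space f.
Proof. by case: HY => H _; apply: H. Qed.

Lemma Ycomb a f g : Y f -> Y g -> Y (fun z => a * f z + g z).
Proof. by case: HY => _ [_ H]; apply: H. Qed.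

Lemma Y0 : Y (fun _ => 0).
Proof. by case: HY => _ []. Qed.

Lemma Yscale a f : Y f -> Y (fun z => a * f z).
Proof.
move=> Yf; have := Ycomb a Yf Y0.
by have -> : (fun z => a * f z + 0) = (fun z => a * f z) by apply: funext => z; rewrite addr0.
Qed.

Lemma Yadd f g : Y f -> Y g -> Y (fun z => f z + g z).
Proof.
move=> Yf Yg; have := Ycomb 1 Yf Yg.
by have -> : (fun z => 1 * f z + g z) = (fun z => f z + g z) by apply: funext => z; rewrite mul1r.
Qed.

Lemma dnorm_opp (f : X -> R) : dnorm (fun z => -1 * f z) = dnorm f.
Proof.
rewrite /dnorm; congr sup; congr image; apply: funext => z.
by rewrite mulN1r normrN.
Qed.

Lemma dnorm0 : @dnorm R X (fun _ => 0) = 0.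
Proof.
apply/eqP; rewrite eq_le; apply/andP; split.
  apply: ge_sup; first by exists 0, 0 => //; rewrite /unit_ballX /= normr0.
  by move=> _ [z _ <-]; rewrite normr0.
by apply: dnorm_ge0; exists 0 => z /=; rewrite normr0 mul0r.
Qed.

Lemma normingP x e : 0 < e -> exists g, Y g /\ dnorm g <= 1 /\ `|x| - e < g x.
Proof.
move=> e0.
have hs : has_sup [set `|y x| | y in [set y | Y y /\ dnorm y <= 1]].
  split; first by exists `|(fun _ : X => (0:R)) x|, (fun _ => 0) => //; split;
    [exact: Y0 | rewrite dnorm0].
  exists `|x| => _ [y [Yy dy] <-].
  apply: le_trans (le_dnormM x (Ydual Yy)) _.
  by rewrite -[leRHS]mul1r ler_wpM2r.
have [_ [y [Yy dy] <-]] := sup_adherent e0 hs.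
rewrite -HN => H.
have [yx0|yx0] := leP 0 (y x).
  by exists y; rewrite -(ger0_norm yx0).
exists (fun z => -1 * y z); split; first exact: Yscale.
by rewrite dnorm_opp; split => //; rewrite mulN1r -(ltr0_norm yx0).
Qed.


Hypothesis HD : daugavet_wrt Y.

Lemma dau1 h w e : Y h -> dnorm h = 1 -> `|w| = 1 -> 0 < e ->
  exists z, `|z| <= 1 /\ 1 - e < h z /\ 2 - e < `|w + z|.
Proof.
move=> Yh dh nw e0; have [L B] := Ydual Yh.
have op1 : opnorm (fun z => h z *: w) = 1.
  rewrite /opnorm -dh /dnorm; congr sup; congr image; apply: funext => z.
  by rewrite normrZ nw mulr1.
have op2 := HD w Yh; rewrite op1 /opnorm in op2.
have hs : has_sup [set `|z + h z *: w| | z in @unit_ballX _ X].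
  split; first by exists `|0 + h 0 *: w|, 0 => //; rewrite /unit_ballX /= normr0.
  exists 2 => _ [z zb <-]; rewrite /unit_ballX /= in zb.
  apply: le_trans (ler_normD _ _) _; rewrite normrZ nw mulr1.
  have := le_dnorm B zb; rewrite dh; lra.
have e2 : 0 < e / 2 by lra.
have [_ [z zb <-] Hz] := sup_adherent e2 hs; rewrite op2 in Hz.
rewrite /unit_ballX /= in zb.
have [z' [z'b [hz'0 Hz']]] : exists z', `|z'| <= 1 /\ 0 <= h z' /\
    1 + 1 - e / 2 < `|z' + h z' *: w|.
  have [hz0|hz0] := leP 0 (h z); first by exists z.
  exists (- z); rewrite normrN linN //; split => //; split; first lra.
  by rewrite scaleNr -opprD normrN.
have hz1 : h z' <= 1 by have := le_dnorm B z'b; rewrite dh ger0_norm.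
have t1 : `|z' + h z' *: w| <= `|z'| + h z'.
  by apply: le_trans (ler_normD _ _) _; rewrite normrZ nw mulr1 ger0_norm.
have eq1 : z' + h z' *: w = (w + z') - (1 - h z') *: w.
  rewrite scalerBl scale1r opprB; rewrite [w + z']addrC -addrA [w + _]addrC subrK addrC //.
have t2 : `|z' + h z' *: w| <= `|w + z'| + (1 - h z').
  rewrite eq1; apply: le_trans (ler_normB _ _) _.
  by rewrite normrZ nw mulr1 ger0_norm // subr_ge0.
exists z'; split => //; split; lra.
Qed.


Lemma dnorm_normalize h : Y h -> 0 < dnorm h ->
  dnorm (fun z => (dnorm h)^-1 * h z) = 1.
Proof.
move=> Yh s0; set s := dnorm h; have [L B] := Ydual Yh.
have Yh' := Yscale s^-1 Yh; have [L' B'] := Ydual Yh'.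
apply/eqP; rewrite eq_le; apply/andP; split.
  apply: ge_sup; first by exists `|s^-1 * h 0|, 0 => //; rewrite /unit_ballX /= normr0.
  move=> _ [z zb <-]; rewrite normrM gtr0_norm ?invr_gt0 //.
  by rewrite ler_pdivrMl // mulr1; apply: le_dnorm.
rewrite leNgt; apply/negP => t1.
have : s <= s * dnorm (fun z => s^-1 * h z).
  apply: ge_sup; first by exists `|h 0|, 0 => //; rewrite /unit_ballX /= normr0.
  move=> _ [z zb <-].
  have := le_dnorm B' zb; rewrite normrM gtr0_norm ?invr_gt0 // ler_pdivrMl //.
rewrite -[X in X <= _ -> _]mulr1 ler_pM2l //; lra.
Qed.

Lemma dauZ h w k : Y h -> `|w| = 1 -> 0 < k ->
  exists z, `|z| <= 1 /\ dnorm h - k < h z /\ 2 - k < `|w + z|.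
Proof.
move=> Yh nw k0; have [L B] := Ydual Yh.
have s0 := dnorm_ge0 B; set s := dnorm h in s0 *.
have [s00|sp] := eqVneq s 0.
  exists w; rewrite nw; split => //; split.
    have := le_dnorm B (x := w); rewrite nw => /(_ (lexx _)).
    rewrite -/s s00 => H; have : `|h w| = 0 by apply/eqP; rewrite eq_le H normr_ge0.
    move/eqP; rewrite normr_eq0 => /eqP ->; lra.
  by rewrite -mulr2n normrMn nw; lra.
have sp' : 0 < s by rewrite lt_def sp s0.
have e0 : 0 < k / (s + 1) by apply: divr_gt0 => //; lra.
have [z [zb [hz wz]]] := dau1 (Yscale s^-1 Yh) (dnorm_normalize Yh sp') nw e0.
have ee : k / (s + 1) * (s + 1) = k by rewrite divfK //; apply: lt0r_neq0; lra.
have eL : k / (s + 1) < k.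
  by rewrite ltr_pdivrMr; [nra | lra].
exists z; split => //; split; last lra.
have -> : h z = s * (s^-1 * h z) by rewrite mulrA mulfV // mul1r.
set e := k / (s + 1) in ee eL hz wz *; set u := s^-1 * h z in hz *.
nra.
Qed.


Lemma dual_le1 g u : Y g -> dnorm g <= 1 -> `|u| <= 1 -> g u <= 1.
Proof.
move=> Yg dg ub; have [L B] := Ydual Yg.
apply: le_trans (ler_norm _) _; apply: le_trans (le_dnorm B ub) dg.
Qed.

Lemma dual_le_s h u : Y h -> `|u| <= 1 -> h u <= dnorm h.
Proof.
move=> Yh ub; have [L B] := Ydual Yh.
apply: le_trans (ler_norm _) (le_dnorm B ub).
Qed.

Lemma slices_seq (d : R) (ws : seq X) : 0 < d -> (forall w, w \in ws -> `|w| = 1) ->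
  exists h c, Y h /\ (exists z, `|z| <= 1 /\ c < h z) /\
    forall v, `|v| <= 1 -> c < h v -> forall w, w \in ws -> 2 - d < `|w + v|.
Proof.
move=> d0; elim: ws => [|w ws IH] Hws.
  exists (fun _ => 0), (-1); split; first exact: Y0.
  split; first by exists 0; rewrite normr0; split => //; lra.
  by move=> v _ _ w; rewrite in_nil.
have nw : `|w| = 1 by apply: Hws; rewrite in_cons eqxx.
have [h [c [Yh [[z0 [z0b hz0]] Hv]]]] : exists h c, Y h /\
    (exists z, `|z| <= 1 /\ c < h z) /\
    forall v, `|v| <= 1 -> c < h v -> forall w, w \in ws -> 2 - d < `|w + v|.
  by apply: IH => w' Hw'; apply: Hws; rewrite in_cons Hw' orbT.
set s := dnorm h; set rho := h z0 - c.
have hz0s : h z0 <= s := dual_le_s Yh z0b.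
set k := Num.min (rho / 3) (d / 6).
have : k <= k := lexx k; rewrite {2}/k le_min => /andP [k1 k2].
have k0 : 0 < k by rewrite lt_min; apply/andP; split; rewrite /rho; lra.
have [z [zb [hz wz]]] := dauZ Yh nw k0; rewrite -/s in hz.
have [g [Yg [dg gwz]]] := normingP (w + z) k0.
have [Lg Bg] := Ydual Yg.
rewrite [g (w + z)]linD // in gwz.
have gz1 := dual_le1 Yg dg zb.
have gw1 : g w <= 1 by apply: dual_le1 => //; rewrite nw.
set c2 := Num.max (c + 1) (s + 1 - d / 2).
have : c2 <= c2 := lexx c2; rewrite {1}/c2 ge_max => /andP [m1 m2].
exists (fun v => h v + g v), c2; split; first exact: Yadd.
split.
  exists z; split => //; rewrite /c2 gt_max; apply/andP; split; rewrite /rho in k1; lra.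
move=> v vb /= hv w'; rewrite in_cons => /orP [/eqP ->|Hw'].
  have := dual_le_s Yh vb; rewrite -/s => hvs.
  have gvw : g (w + v) <= `|w + v|.
    apply: le_trans (ler_norm _) _; apply: le_trans (le_dnormM _ (Ydual Yg)) _.
    by rewrite -[leRHS]mul1r ler_wpM2r.
  rewrite [g (w + v)]linD // in gvw; lra.
apply: Hv => //; have := dual_le1 Yg dg vb; lra.
Qed.

End S.

Lemma prod_le_each (R : realType) (n : nat) (al : 'I_n -> R) i :
  (forall j, 0 < al j < 1) -> \prod_(j < n) al j <= al i.
Proof.
move=> H; rewrite (bigD1 i) //=.
have := H i => /andP [a0 a1].
rewrite -[leRHS]mulr1; apply: ler_wpM2l; first exact: ltW.
apply: prodr_ile1 => j _; have := H j => /andP [b0 b1]; rewrite !ltW //.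
Qed.

Lemma comb_bound (R : realType) (X : normedModType R) (n : nat) (lam : 'I_n -> R)
  (fs : 'I_n -> X -> R) z :
  (forall i, dual_ball (fs i)) -> (forall i, 0 < lam i) -> \sum_(i < n) lam i = 1 ->
  `|\sum_(i < n) lam i * fs i z| <= `|z|.
Proof.
move=> Hf hl sl; apply: le_trans (ler_norm_sum _ _ _) _.
apply: (le_trans (_ : _ <= \sum_(i < n) lam i * `|z|)).
  apply: ler_sum => i _; rewrite normrM gtr0_norm //; apply: ler_wpM2l; first exact: ltW.
  have [Di dn] := Hf i; apply: le_trans (le_dnormM z Di) _.
  by rewrite -[leRHS]mul1r ler_wpM2r.
by rewrite -mulr_suml sl mul1r.
Qed.

Unset Implicit Arguments.

Theorem mainTheorem3 (R : realType) (X : completeNormedModType R) :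
  almost_daugavet X ->
  forall (n : nat) (lam : 'I_n -> R) (x : 'I_n -> X) (alpha : 'I_n -> R),
    (forall i, `|x i| = 1) ->
    (forall i, 0 < alpha i < 1) ->
    (forall i, 0 < lam i) ->
    \sum_(i < n) lam i = 1 ->
    dual_diam (conv_slices lam x alpha) = 2.
Proof.
move=> [Y [HY [HN HD]]] n lam x alpha nx ha hl sl.
set C := conv_slices lam x alpha.
have bnd2 : forall f g, C f -> C g -> forall z, `|f z - g z| <= 2 * `|z|.
  move=> _ _ [fs [Hf ->]] [gs [Hg ->]] z.
  apply: le_trans (ler_normB _ _) _.
  have := @comb_bound R X n lam fs z (fun i => (Hf i).1) hl sl.
  have := @comb_bound R X n lam gs z (fun i => (Hg i).1) hl sl; lra.
have Dle2 : forall f g, C f -> C g -> dnorm (fun z => f z - g z) <= 2.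
  move=> f g Cf Cg; apply: ge_sup.
    by exists `|f 0 - g 0|, 0 => //; rewrite /unit_ballX /= normr0.
  move=> _ [z zb <-]; apply: le_trans (bnd2 f g Cf Cg z) _.
  rewrite /unit_ballX /= in zb; lra.
have key : forall e, 0 < e -> exists f g, C f /\ C g /\ 2 - e <= dnorm (fun z => f z - g z).
  move=> e e0.
  set a := \prod_(j < n) alpha j.
  have a0 : 0 < a by apply: prodr_gt0 => j _; have := ha j => /andP [].
  set d := Num.min (e / 4) (a / 2).
  have : d <= d := lexx d; rewrite {2}/d le_min => /andP [d1 d2].
  have d0 : 0 < d by rewrite lt_min; apply/andP; split; lra.
  set ws := [seq x i | i <- enum 'I_n] ++ [seq - x i | i <- enum 'I_n].
  have Hws : forall w, w \in ws -> `|w| = 1.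
    move=> w; rewrite mem_cat => /orP [] /mapP [i _ ->]; by rewrite ?normrN nx.
  have [h [c [Yh [[u [ub hu]] Hv]]]] := slices_seq HY HN HD d0 Hws.
  have Hu : forall i, 2 - d < `|x i + u| /\ 2 - d < `|x i - u|.
    move=> i; split.
      by apply: Hv => //; rewrite mem_cat; apply/orP; left; apply/mapP; exists i; rewrite ?mem_enum.
    rewrite -normrN opprB [u - _]addrC; apply: Hv => //; rewrite mem_cat; apply/orP; right.
    by apply/mapP; exists i; rewrite ?mem_enum.
  have [f Hf] := @choice _ _ (fun i g => Y g /\ dnorm g <= 1 /\ `|x i + u| - d < g (x i + u))
    (fun i => normingP HY HN (x i + u) d0).
  have [g Hg] := @choice _ _ (fun i g => Y g /\ dnorm g <= 1 /\ `|x i - u| - d < g (x i - u))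
    (fun i => normingP HY HN (x i - u) d0).
  have ai : forall i, 2 * d <= alpha i.
    move=> i; have := @prod_le_each R n alpha i ha; rewrite -/a; lra.
  have nxb : forall i, `|x i| <= 1 by move=> i; rewrite nx.
  have fprop : forall i, wslice (x i) (alpha i) (f i) /\ 1 - 2 * d < f i u.
    move=> i; have [Yf [df Hfi]] := Hf i; have [Lf Bf] := Ydual HY Yf.
    have [Hu1 _] := Hu i.
    rewrite [f i (x i + u)]linD // in Hfi.
    have := dual_le1 HY Yf df ub; have := dual_le1 HY Yf df (nxb i) => t1 t2.
    split; last lra.
    split; first by split => //; exact: Ydual HY Yf.
    have := ai i; lra.
  have gprop : forall i, wslice (x i) (alpha i) (g i) /\ g i u < - 1 + 2 * d.
    move=> i; have [Yf [df Hfi]] := Hg i; have [Lf Bf] := Ydual HY Yf.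
    have [_ Hu1] := Hu i.
    rewrite [g i (x i - u)]linD // [g i (- u)]linN // in Hfi.
    have nu : `|- u| <= 1 by rewrite normrN.
    have := dual_le1 HY Yf df nu; rewrite [g i (- u)]linN // => t0.
    have := dual_le1 HY Yf df (nxb i) => t1.
    split; last lra.
    split; first by split => //; exact: Ydual HY Yf.
    have := ai i; lra.
  set F := fun z => \sum_(i < n) lam i * f i z.
  set G := fun z => \sum_(i < n) lam i * g i z.
  have CF : C F by exists f; split => // i; exact: (fprop i).1.
  have CG : C G by exists g; split => // i; exact: (gprop i).1.
  exists F, G; split => //; split => //.
  have hsF : has_sup [set `|F z - G z| | z in @unit_ballX _ X].
    split; first by exists `|F 0 - G 0|, 0 => //; rewrite /unit_ballX /= normr0.
    exists 2 => _ [z zb <-]; apply: le_trans (bnd2 F G CF CG z) _.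
    rewrite /unit_ballX /= in zb; lra.
  have : `|F u - G u| <= dnorm (fun z => F z - G z).
    by rewrite /dnorm; have := sup_upper_bound hsF; apply; exists u.
  have : 2 - 4 * d <= F u - G u.
    rewrite /F /G -sumrB.
    apply: (le_trans (_ : _ <= \sum_(i < n) lam i * (2 - 4 * d))).
      by rewrite -mulr_suml sl mul1r.
    apply: ler_sum => i _; have := (fprop i).2; have := (gprop i).2; have := hl i.
    nra.
  have := ler_norm (F u - G u); lra.
rewrite /dual_diam; apply/eqP; rewrite eq_le; apply/andP; split.
  apply: ge_sup.
    have [f [g [Cf [Cg _]]]] := key 1 ltr01.
    by exists (dnorm (fun z => f z - g z)), f => //; exists g.
  by move=> _ [f Cf [g Cg <-]]; apply: Dle2.
apply/ler_addgt0Pr => e e0.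
have [f [g [Cf [Cg H]]]] := key e e0.
have hsD : has_sup [set dnorm (fun z => f z - g z) | f in C & g in C].
  split; first by exists (dnorm (fun z => f z - g z)), f => //; exists g.
  by exists 2 => _ [f' Cf' [g' Cg' <-]]; apply: Dle2.
have := sup_upper_bound hsD; move=> /(_ (dnorm (fun z => f z - g z))) H2.
have : dnorm (fun z => f z - g z) <= sup [set dnorm (fun z => f z - g z) | f in C & g in C].
  by apply: H2; exists f => //; exists g.
lra.
Qed.
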